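(* Let $Y,Z$ be finite-dimensional real or complex vector spaces, let $f$ be a vector field on $Y$, let $F\colon Y\to Z$ be quadratic, and let $g,\gamma$ be vector fields on $Z$ such that $F'(y)f(y)=g(F(y))$ and $F''(f(y),f(y))=\gamma(F(y))$ for all $y\in Y$. Let nonzero $b_1,\dots,b_s$ and $h>0$ be given, and suppose $y_0,y_1,Y_1,\dots,Y_s\in Y$ satisfy the SyDIRK equations \[ Y_i = y_0 + h\sum_{j=1}^{i-1} b_j f(Y_j) + \frac h2 b_i f(Y_i)\ (i=1,\dots,s),\qquad y_1 = y_0 + h\sum_{i=1}^s b_i f(Y_i). \] Then $z_0:=F(y_0)$, $Z_i:=F(Y_i)$, $z_1:=F(y_1)$ satisfy \[ Z_i = z_0 + h\sum_{j=1}^{i-1} b_j g(Z_j) + \frac h2 b_i g(Z_i) - \frac{h^2}{8} b_i^2\gamma(Z_i)\ (i=1,\dots,s),\qquad z_1 = z_0 + h\sum_{i=1}^s b_i g(Z_i). \]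
   Context: A map $F\colon Y\to Z$ is quadratic if for every $y_0\in Y$, $F(y)=F(y_0)+F'(y_0)(y-y_0)+\tfrac12F''(y-y_0,y-y_0)$ for all $y$, with $F''$ a constant symmetric bilinear map $Y\times Y\to Z$. *)

(* Defs.v *)
From HB Require Import structures.
From mathcomp Require Import all_boot all_order all_algebra.
Set Implicit Arguments. Unset Strict Implicit. Unset Printing Implicit Defensive.
Import Order.TTheory GRing.Theory Num.Theory.
Local Open Scope ring_scope.

(* F : Y -> Z is quadratic with first derivative F1 (F1 y0 = F'(y0), a linear
   map Y -> Z) and constant symmetric bilinear second derivative F2 = F''. *)
Definition is_quadratic (K : numFieldType) (Y Z : vectType K)
    (F : Y -> Z) (F1 : Y -> Y -> Z) (F2 : Y -> Y -> Z) : Prop :=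
  [/\ (forall y0 : Y, linear (F1 y0)),
      (forall u : Y, linear (F2 u)),
      (forall u v : Y, F2 u v = F2 v u) &
      (forall y0 y : Y,
          F y = F y0 + F1 y0 (y - y0) + 2%:R^-1 *: F2 (y - y0) (y - y0))].

(* Main.v *)
Require Import Defs.
From HB Require Import structures.
From mathcomp Require Import all_boot all_order all_algebra.
From mathcomp Require Import ring.
Import Order.TTheory GRing.Theory Num.Theory.
Local Open Scope ring_scope.

Lemma linZ_aux (K : numFieldType) (U V : lmodType K) (f : U -> V) :
  linear f -> forall (a : K) u, f (a *: u) = a *: f u.
Proof.
move=> Hf a u.
have f0 : f 0 = 0.
  have := Hf 1 0 0; rewrite scaler0 addr0 scale1r => H.
  by apply: (addrI (f 0)); rewrite addr0 -H.
by have := Hf a u 0; rewrite f0 !addr0.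
Qed.

Lemma sum_lt_S (V : zmodType) (s : nat) (G : 'I_s -> V) (i : 'I_s) :
  \sum_(j < s | (j < i.+1)%N) G j = \sum_(j < s | (j < i)%N) G j + G i.
Proof.
rewrite (bigD1 i) //= addrC; congr (_ + _).
apply: eq_bigl => j; rewrite ltnS leq_eqVlt.
case: (eqVneq j i) => [->|ne] /=; first by rewrite ?eqxx ?ltnn ?andbF.
have ne' : (val j == val i) = false by apply/negbTE; rewrite (inj_eq val_inj).
by rewrite ne' ?andbT.
Qed.

Lemma zaux (V : zmodType) (A B X Y : V) : A + (B + X) - (A + B + Y) = X - Y.
Proof. by rewrite addrA opprD addrA [A + B + X - _]addrAC subrr add0r. Qed.

Lemma laux1 (K : numFieldType) (V : lmodType K) (X G Ga : V) (a c : K) :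
  X = X + (-a) *: G + c *: Ga + a *: G - c *: Ga.
Proof. by rewrite [_ + a *: G]addrAC addrK scaleNr addrNK. Qed.
Lemma laux2 (K : numFieldType) (V : lmodType K) (X G Ga : V) (a c k : K) :
  k = a + a ->
  X + a *: G + c *: Ga = X + (-a) *: G + c *: Ga + k *: G.
Proof. move=> ->. rewrite scalerDl scaleNr addrAC -!addrA; congr (_ + _).
by rewrite addrCA addKr. Qed.

Theorem corollary2p8 (K : numFieldType) (Y Z : vectType K)
    (f : Y -> Y) (F : Y -> Z) (F1 F2 : Y -> Y -> Z) (g gamma : Z -> Z)
    (s : nat) (b : 'I_s -> K) (h : K) (y0 y1 : Y) (Ys : 'I_s -> Y) :
  is_quadratic F F1 F2 ->
  (forall y : Y, F1 y (f y) = g (F y)) ->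
  (forall y : Y, F2 (f y) (f y) = gamma (F y)) ->
  (forall i : 'I_s, b i != 0) ->
  0 < h ->
  (forall i : 'I_s,
     Ys i = y0 + h *: (\sum_(j < s | (j < i)%N) b j *: f (Ys j))
               + (h / 2%:R * b i) *: f (Ys i)) ->
  y1 = y0 + h *: (\sum_(i < s) b i *: f (Ys i)) ->
  (forall i : 'I_s,
     F (Ys i) = F y0 + h *: (\sum_(j < s | (j < i)%N) b j *: g (F (Ys j)))
                + (h / 2%:R * b i) *: g (F (Ys i))
                - (h ^+ 2 / 8%:R * b i ^+ 2) *: gamma (F (Ys i)))
  /\ F y1 = F y0 + h *: (\sum_(i < s) b i *: g (F (Ys i))).
Proof.
move=> [L1 L2 Sym Q] Hg Hgam _ _ HY Hy1.
have two0 : (2%:R : K) != 0 by rewrite pnatr_eq0.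
have F1Z : forall y a u, F1 y (a *: u) = a *: F1 y u.
  by move=> y; apply: linZ_aux.
have F2Z : forall a u, F2 (a *: u) (a *: u) = (a ^+ 2) *: F2 u u.
  move=> a u; rewrite linZ_aux // Sym linZ_aux // scalerA -expr2.
  by [].
pose W (n : nat) := y0 + h *: (\sum_(j < s | (j < n)%N) b j *: f (Ys j)).
pose S (n : nat) := F y0 + h *: (\sum_(j < s | (j < n)%N) b j *: g (F (Ys j))).
have step : forall i : 'I_s, F (W i) = S i ->
    F (Ys i) = S i + (h / 2%:R * b i) *: g (F (Ys i))
                - (h ^+ 2 / 8%:R * b i ^+ 2) *: gamma (F (Ys i))
    /\ F (W i.+1) = S i.+1.
  move=> i HW.
  set u := f (Ys i).
  have HYi : Ys i = W i + (h / 2%:R * b i) *: u by rewrite [LHS]HY.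
  have e1 : W i - Ys i = (- (h / 2%:R * b i)) *: u.
    by rewrite HYi opprD addrA subrr add0r scaleNr.
  have e2 : W i.+1 - Ys i = (h / 2%:R * b i) *: u.
    rewrite HYi /W sum_lt_S scalerDr scalerA -/u zaux -scalerBl; congr (_ *: _).
    by field.
  have QA := Q (Ys i) (W i); rewrite e1 F1Z F2Z Hg Hgam HW in QA.
  have QB := Q (Ys i) (W i.+1); rewrite e2 F1Z F2Z Hg Hgam in QB.
  split.
    set G := g _; set Ga := gamma _.
    rewrite QA scalerA.
    have -> : h ^+ 2 / 8%:R * b i ^+ 2 = 2%:R^-1 * (- (h / 2%:R * b i)) ^+ 2.
      by field.
    exact: laux1.
  rewrite QB [S i.+1]/S sum_lt_S scalerDr addrA -[F y0 + _]/(S i) QA.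
  rewrite !scalerA sqrrN; apply: laux2; by field.
have main : forall n, (n <= s)%N -> F (W n) = S n.
  elim=> [|n IH] Hn.
    by rewrite /W /S !big_pred0 // !scaler0 !addr0.
  exact: (step (Ordinal Hn) (IH (ltnW Hn))).2.
split.
  by move=> i; exact: (step i (main i (ltnW (ltn_ord i)))).1.
have E : forall (V : zmodType) (G : 'I_s -> V),
    \sum_(j < s | (j < s)%N) G j = \sum_(j < s) G j.
  by move=> V G; apply: eq_bigl => j; exact: ltn_ord.
have := main s (leqnn s); rewrite /W /S !E => <-.
by rewrite Hy1.
Qed.
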